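(* Let $-\infty\le a<b\le\infty$, let $\kappa,\varphi:(a,b)\to\mathbb C$ be measurable with $\kappa\in L^2(a,b)$ and $\mathbb 1_{(a,c)}\varphi\in L^2(a,b)$ for every $c\in(a,b)$. Choose $c_0:=a<c_1<c_2<\dots<b$ with $\|\mathbb 1_{(c_n,b)}\kappa\|^2=2^{-n}\|\kappa\|^2$, and set $J_n=(c_{n-1},c_n)$, $\omega_n=\|\mathbb 1_{J_n}\kappa\|\cdot\|\mathbb 1_{J_n}\varphi\|$. Then \[ \sup_{n\in\mathbb N}\omega_n<\infty\iff\limsup_{t\nearrow b}\|\mathbb 1_{(a,t)}\varphi\|\cdot\|\mathbb 1_{(t,b)}\kappa\|<\infty . \]
   Context: Norms are $L^2(a,b)$-norms; $\mathbb 1_E$ is the indicator function of $E$. *)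

(* Defs.v *)
From HB Require Import structures.
From mathcomp Require Import all_boot all_order all_algebra.
From mathcomp Require Import all_classical all_reals all_analysis.
From mathcomp.real_closed Require Import complex.
Set Implicit Arguments. Unset Strict Implicit. Unset Printing Implicit Defensive.
Import Order.TTheory GRing.Theory Num.Theory.
Import numFieldTopology.Exports numFieldNormedType.Exports.
Local Open Scope classical_set_scope.
Local Open Scope ring_scope.

Definition eoo (R : realType) (x y : \bar R) : set R :=
  [set t : R | (x < t%:E)%E /\ (t%:E < y)%E].

Definition cnorm2 (R : realType) (z : R[i]) : R :=
  (complex.Re z) ^+ 2 + (complex.Im z) ^+ 2.

Definition cmeasurable (R : realType) (D : set R) (f : R -> R[i]) : Prop :=
  measurable_fun D (fun x => complex.Re (f x)) /\
  measurable_fun D (fun x => complex.Im (f x)).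

Definition L2sq (R : realType) (E : set R) (f : R -> R[i]) : \bar R :=
  (\int[lebesgue_measure]_(x in E) (cnorm2 (f x))%:E)%E.

(* ||1_E f|| (used only when L2sq E f is finite) *)
Definition L2norm (R : realType) (E : set R) (f : R -> R[i]) : R :=
  Num.sqrt (fine (L2sq E f)).

(* the filter t -> b from the left, b an extended real (b = -oo never occurs) *)
Definition at_left_e (R : realType) (b : \bar R) : set_system R :=
  match b with
  | EFin r => r^'-
  | +oo%E => +oo%R
  | -oo%E => [set: set R]
  end.

(* Main.v *)
Set Warnings "-all".
Require Import Defs.
From HB Require Import structures.
From mathcomp Require Import all_boot all_order all_algebra.
From mathcomp Require Import all_classical all_reals all_analysis.
From mathcomp Require Import measurable_realfun.
From mathcomp.real_closed Require Import complex.
Import Order.TTheory GRing.Theory Num.Theory.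
Import numFieldTopology.Exports numFieldNormedType.Exports.
Local Open Scope classical_set_scope.
Local Open Scope ring_scope.
From mathcomp Require Import ring lra.
Local Open Scope ereal_scope.

Section helpers.
Variable R : realType.
Implicit Types (x y z : \bar R) (f : R -> R[i]).

Lemma eoo_meas x y : measurable (eoo x y).
Proof.
have := @EFin_measurable R setT measurableT _ (emeasurable_itv (Interval (BRight x) (BLeft y))).
rewrite setTI; congr measurable; apply/funext => t /=.
by rewrite /eoo /= in_itv /=; apply/propext; split => [/andP[]|[->->]].
Qed.

Lemma eoo_sub x y x' y' : x' <= x -> y <= y' -> eoo x y `<=` eoo x' y'.
Proof.
move=> h1 h2 t [t1 t2]; split; [exact: le_lt_trans h1 t1|exact: lt_le_trans t2 h2].
Qed.

Arguments eoo_sub [x y x' y'].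
Lemma integrand_meas (D E : set R) f : cmeasurable D f -> measurable D -> E `<=` D ->
  measurable_fun E (fun t => (cnorm2 (f t))%:E).
Proof.
move=> [mr mi] mD ED; apply/measurable_EFinP.
apply: (measurable_funS mD ED).
rewrite /cnorm2; apply: measurable_funD; exact: measurable_funX.
Qed.

Arguments integrand_meas [D E f].
Lemma L2sq_ge0 E f : 0 <= L2sq E f.
Proof. by apply: integral_ge0 => t _; rewrite lee_fin /cnorm2 addr_ge0 // sqr_ge0. Qed.

Lemma L2sq_mono a b f x y x' y' : cmeasurable (eoo a b) f ->
  a <= x' -> y' <= b -> x' <= x -> y <= y' -> L2sq (eoo x y) f <= L2sq (eoo x' y') f.
Proof.
move=> mf ax yb xx yy; apply: ge0_subset_integral; first exact: eoo_meas.
- exact: eoo_meas.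
- exact: (integrand_meas mf (eoo_meas a b) (eoo_sub ax yb)).
- by move=> t _; rewrite lee_fin /cnorm2 addr_ge0 // sqr_ge0.
- exact: eoo_sub.
Qed.

Lemma L2sq_split a b f x (y : R) z : cmeasurable (eoo a b) f ->
  a <= x -> z <= b -> x < y%:E -> y%:E < z ->
  L2sq (eoo x z) f = L2sq (eoo x y%:E) f + L2sq (eoo y%:E z) f.
Proof.
move=> mf ax zb xy yz.
have sub : eoo x z `<=` eoo a b by exact: eoo_sub.
have mD : measurable (eoo a b) by exact: eoo_meas.
have E : eoo x z `\ y = eoo x y%:E `|` eoo y%:E z.
  apply/funext => t /=; apply/propext; rewrite /eoo /=; split.
  - move=> [[h1 h2] nty]; have : t != y by apply/eqP.
    rewrite neq_lt => /orP[ty|yt]; [left|right]; split => //.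
  - case=> [[h1 h2]|[h1 h2]]; split.
    + by split => //; exact: lt_trans h2 yz.
    + by move=> ety; move: h2; rewrite ety ltxx.
    + by split => //; exact: lt_trans xy h1.
    + by move=> ety; move: h1; rewrite ety ltxx.
have subU : eoo x y%:E `|` eoo y%:E z `<=` eoo a b by rewrite -E => t [] /sub.
rewrite /L2sq -(@integral_setD1 _ _ y) E.
- rewrite ge0_integral_setU //; try exact: eoo_meas.
  + exact: (integrand_meas mf mD subU).
  + by move=> t _; rewrite lee_fin /cnorm2 addr_ge0 // sqr_ge0.
  + rewrite disj_set2E; apply/eqP/funext => t /=; apply/propext; split => // -[[_ h1] [h2 _]].
    by move: (lt_trans h1 h2); rewrite ltxx.
- by apply: measurableU; exact: eoo_meas.
- have H := (integrand_meas mf mD subU). exact H.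
Qed.
End helpers.
Local Open Scope ereal_scope.
Section lims.
Variable R : realType.

Lemma esup_ltP (g : R -> R) (F : set_system R) : Filter F ->
  limf_esup (fun t => (g t)%:E) F < +oo -> exists M : R, F [set t | (g t <= M)%R].
Proof.
move=> FF; rewrite limf_esupE => /ereal_inf_lt [_ [V FV <-] supV].
case e: (ereal_sup _) supV => [r| |] // _.
- exists r; apply: filterS FV => t Vt /=; rewrite -lee_fin -e.
  by apply: ereal_sup_ubound; exists t.
- exists 0%R; apply: filterS FV => t Vt.
  have : (g t)%:E <= -oo by rewrite -e; apply: ereal_sup_ubound; exists t.
  by rewrite leeNy_eq.
Qed.

Lemma esup_ltP2 (g : R -> R) (F : set_system R) (M : R) : Filter F ->
  F [set t | (g t <= M)%R] -> limf_esup (fun t => (g t)%:E) F < +oo.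
Proof.
move=> FF FV; rewrite limf_esupE; apply: (@le_lt_trans _ _ M%:E); last exact: ltry.
apply: (@le_trans _ _ (ereal_sup [set (g t)%:E | t in [set t | (g t <= M)%R]])).
  by apply: ereal_inf_lbound; exists [set t | (g t <= M)%R].
by apply: ge_ereal_sup => _ [t /= h <-]; rewrite lee_fin.
Qed.

Lemma near_ab (a b : \bar R) : a < b -> at_left_e b [set t | a < t%:E /\ t%:E < b].
Proof.
case: b => [r| |] //= ab.
- case: a ab => [a0| |] //= ab.
  + near=> t; split; rewrite lte_fin; near: t; [exact: nbhs_left_gt|exact: nbhs_left_lt].
  + near=> t; split; first exact: ltNyr. rewrite lte_fin; near: t; exact: nbhs_left_lt.
- case: a ab => [a0| |] //= ab.
  + by exists a0; split => // t a0t; split; [rewrite lte_fin|exact: ltry].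
  + by exists 0%R; split => // t _; split; [exact: ltNyr|exact: ltry].
Unshelve. all: by end_near. Qed.

Lemma at_left_e_ex (b : \bar R) (P : set R) : -oo < b -> at_left_e b P ->
  exists e : R, e%:E < b /\ forall t : R, (e < t)%R -> t%:E < b -> P t.
Proof.
case: b => [r| |] //= _.
- move=> /nbhs_ballP[e /= e0 H]; exists (r - e)%R; split.
    by rewrite lte_fin ltrBlDr ltrDl.
  move=> t et; rewrite lte_fin => tr; apply: H => //.
  rewrite /ball /= ger0_norm ?subr_ge0 ?ltW //.
  by rewrite ltrBlDr addrC -ltrBlDr.
- move=> [M [Mr H]]; exists M; split; first exact: ltry.
  by move=> t Mt _; exact: H.
Qed.
End lims.
Arguments L2sq_mono [R a b f x y x' y'].
Arguments near_ab [R a b].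
Arguments at_left_e_ex [R b P].
Arguments esup_ltP [R g F].
Arguments esup_ltP2 [R g F].
Arguments L2sq_split [R a b f x y z].

Local Open Scope ring_scope.
Lemma w2 (R : realType) m : (2:R) ^- m = 2 * 2 ^- m.+1.
Proof. by rewrite exprS invfM mulrA divff ?mul1r. Qed.

Lemma geo0 (R : realType) (K x : R) : (0 < K)%R -> (forall n, x <= 2 ^- n * K)%R -> (x <= 0)%R.
Proof.
move=> K0 H; rewrite leNgt; apply/negP => x0.
have hb := archi_boundP (ltW (divr_gt0 K0 x0)).
set n := Num.Def.archi_bound _ in hb.
have h2 : (n%:R < (2:R) ^+ n)%R by rewrite -natrX ltr_nat ltn_expl.
have := H n; rewrite leNgt => /negP; apply.
rewrite ltr_pdivrMl ?exprn_gt0 //.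
rewrite ltr_pdivrMr // in hb.
apply: lt_trans hb _; by rewrite ltr_pM2r.
Qed.

Section main.
Variables (R : realType) (a b : \bar R) (kappa phi : R -> R[i]) (c : nat -> \bar R).
Hypotheses (ab : (a < b)%E) (mk : cmeasurable (eoo a b) kappa)
  (mp : cmeasurable (eoo a b) phi)
  (kfin : (L2sq (eoo a b) kappa < +oo)%E)
  (pfin : forall t : R, (a < t%:E)%E -> (t%:E < b)%E -> (L2sq (eoo a t%:E) phi < +oo)%E)
  (c0 : c 0%N = a) (cinc : forall n, (c n < c n.+1)%E) (cb : forall n, (c n < b)%E)
  (chalf : forall n, L2sq (eoo (c n) b) kappa = ((2 ^- n)%:E * L2sq (eoo a b) kappa)%E).

Local Notation kk x y := (fine (L2sq (eoo x y) kappa)).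
Local Notation pp x y := (fine (L2sq (eoo x y) phi)).
Let K := kk a b.

Lemma c_ge_a n : (a <= c n)%E.
Proof. elim: n => [|n IH]; first by rewrite c0. exact: le_trans IH (ltW (cinc n)). Qed.

Lemma c_gt_a n : (0 < n)%N -> (a < c n)%E.
Proof. by case: n => // n _; exact: le_lt_trans (c_ge_a n) (cinc n). Qed.

Arguments c_gt_a [n].
Lemma c_real n : (0 < n)%N -> c n = (fine (c n))%:E.
Proof.
move=> n0; have h1 := c_gt_a n0; have h2 := cb n.
case: (c n) h1 h2 => [r| |] //=.
- by move=> _; rewrite ltNge leey.
- by rewrite ltNge leNye.
Qed.

Arguments c_real [n].
Lemma K_ge0 : 0 <= K.
Proof. rewrite /K; apply: fine_ge0; exact: L2sq_ge0. Qed.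

Lemma Lab : L2sq (eoo a b) kappa = K%:E.
Proof. by rewrite fineK // ge0_fin_numE ?L2sq_ge0. Qed.

Lemma kfin_sub x y : (a <= x)%E -> (y <= b)%E -> L2sq (eoo x y) kappa \is a fin_num.
Proof.
move=> ax yb; rewrite ge0_fin_numE ?L2sq_ge0 //; apply: le_lt_trans kfin.
exact: L2sq_mono mk (lexx a) (lexx b) ax yb.
Qed.

Lemma kk_mono x y x' y' : (a <= x')%E -> (y' <= b)%E -> (x' <= x)%E -> (y <= y')%E ->
  kk x y <= kk x' y'.
Proof.
move=> ax yb xx yy; apply: fine_le.
- apply: kfin_sub; [exact: le_trans ax xx|exact: le_trans yy yb].
- exact: kfin_sub.
- exact: L2sq_mono mk ax yb xx yy.
Qed.

Lemma kk_ge0 x y : 0 <= kk x y.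
Proof. rewrite /K; apply: fine_ge0; exact: L2sq_ge0. Qed.
Lemma pp_ge0 x y : 0 <= pp x y.
Proof. rewrite /K; apply: fine_ge0; exact: L2sq_ge0. Qed.

Lemma kk_c n : kk (c n) b = 2 ^- n * K.
Proof. by rewrite chalf Lab. Qed.

Lemma kJ n : (0 < n)%N -> kk (c n.-1) (c n) = 2 ^- n * K.
Proof.
case: n => // m _ /=.
have h : kk (c m) b = kk (c m) (c m.+1) + kk (c m.+1) b.
  rewrite (c_real (isT : (0 < m.+1)%N)).
  rewrite (L2sq_split (y := fine (c m.+1)) mk (c_ge_a m) (lexx b)); last 2 first.
  - by rewrite -c_real.
  - by rewrite -c_real.
  rewrite fineD //.
  - apply: kfin_sub; [exact: c_ge_a | by rewrite -c_real // ltW].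
  - apply: kfin_sub => //; by rewrite -c_real // c_ge_a.
move: h; rewrite !kk_c w2 => h; lra.
Qed.

Lemma pfin_sub x y (t : R) : (a <= x)%E -> (y <= t%:E)%E -> (a < t%:E)%E -> (t%:E < b)%E ->
  L2sq (eoo x y) phi \is a fin_num.
Proof.
move=> ax yt at_ tb; rewrite ge0_fin_numE ?L2sq_ge0 //; apply: le_lt_trans (pfin t at_ tb).
exact: L2sq_mono mp (lexx a) (ltW tb) ax yt.
Qed.

Lemma pp_mono x y x' (t : R) : (a <= x')%E -> (x' <= x)%E -> (y <= t%:E)%E ->
  (a < t%:E)%E -> (t%:E < b)%E -> pp x y <= pp x' t%:E.
Proof.
move=> ax xx yt at_ tb; apply: fine_le.
- exact: pfin_sub (le_trans ax xx) yt at_ tb.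
- exact: pfin_sub ax (lexx _) at_ tb.
- exact: L2sq_mono mp ax (ltW tb) xx yt.
Qed.

Lemma pp_split n : (0 < n)%N -> pp a (c n.+1) = pp a (c n) + pp (c n) (c n.+1).
Proof.
move=> n0.
have an := c_gt_a n0; have an1 := c_gt_a (isT : (0 < n.+1)%N).
have bn1 := cb n.+1.
rewrite (L2sq_split (y := fine (c n)) mp (lexx a) (ltW bn1)); last 2 first.
- by rewrite -c_real.
- by rewrite -c_real // cinc.
rewrite -!c_real //.
have cn1 := c_real (isT : (0 < n.+1)%N).
rewrite fineD //.
- apply: (@pfin_sub _ _ (fine (c n.+1))) => //; rewrite -?cn1 //; exact: ltW.
- apply: (@pfin_sub _ _ (fine (c n.+1))) => //; rewrite -?cn1 //; exact: c_ge_a.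
Qed.

Lemma sqrt_le_sq (x M : R) : 0 <= x -> 0 <= M -> (Num.sqrt x <= M) = (x <= M ^+ 2).
Proof.
move=> x0 M0; rewrite -[(x <= _)%R]ler_sqrt ?sqr_ge0 // sqrtr_sqr ger0_norm //.
Qed.

Lemma fwd M : (forall n, (0 < n)%N ->
    L2norm (eoo (c n.-1) (c n)) kappa * L2norm (eoo (c n.-1) (c n)) phi <= M) ->
  (limf_esup (fun t : R => (L2norm (eoo a t%:E) phi * L2norm (eoo t%:E b) kappa)%:E)
             (at_left_e b) < +oo)%E.
Proof.
move=> HM.
have M0 : 0 <= M.
  apply: le_trans (HM 1%N isT); apply: mulr_ge0; exact: sqrtr_ge0.
have Fb : Filter (at_left_e b).
  move: ab; case: (b) => [r| |] /= h; [exact: _|exact: _|].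
  by rewrite ltNge leNye in h.
have ppJ : forall k, (0 < k)%N -> pp (c k.-1) (c k) * (2 ^- k * K) <= M ^+ 2.
  move=> k k0; rewrite -kJ // mulrC -sqrt_le_sq ?mulr_ge0 ?kk_ge0 ?pp_ge0 //.
  by rewrite sqrtrM ?kk_ge0 //; exact: HM.
case: (eqVneq K 0) => [K0|Kn0].
  apply: (@esup_ltP2 _ _ _ 0 Fb); apply: (filterS _ (near_ab ab)) => t [at_ tb] /=.
  have : kk t%:E b <= K by apply: kk_mono => //; exact: ltW.
  rewrite K0 => h; rewrite /L2norm; have -> : kk t%:E b = 0 by apply/eqP; rewrite eq_le h kk_ge0.
  by rewrite /L2norm sqrtr0 mulr0.
have Kpos : 0 < K by rewrite lt_def Kn0 K_ge0.
have ppJ' : forall k, (0 < k)%N -> pp (c k.-1) (c k) <= M ^+ 2 * 2 ^+ k / K.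
  move=> k k0; have h := ppJ k k0.
  have -> : pp (c k.-1) (c k) = pp (c k.-1) (c k) * (2 ^- k * K) * (2 ^+ k / K).
    field; rewrite Kn0 /=; exact: expf_neq0.
  apply: (le_trans (ler_wpM2r _ h)); first by rewrite divr_ge0 ?exprn_ge0 // ltW.
  by rewrite mulrA.
have S : forall m, pp a (c m.+1) <= M ^+ 2 * 2 ^+ m.+2 / K.
  elim=> [|m IH].
    rewrite -{1}c0; apply: le_trans (ppJ' 1%N isT) _.
    apply: ler_wpM2r; first by rewrite invr_ge0 ltW.
    apply: ler_wpM2l; first exact: sqr_ge0.
    by rewrite ler_eXn2l // ltr1n.
  rewrite pp_split //; apply: le_trans (lerD IH (ppJ' m.+2 isT)) _.
  by rewrite (exprS _ m.+2) /= le_eqVlt; apply/orP; left; apply/eqP; ring.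
apply: (@esup_ltP2 _ _ _ (2 * M) Fb); apply: (filterS _ (near_ab ab)) => t [at_ tb] /=.
rewrite /L2norm -sqrtrM ?pp_ge0 // sqrt_le_sq ?mulr_ge0 ?pp_ge0 ?kk_ge0 //.
case: (pselect (exists n, (t%:E < c n)%E)) => [ex|nex].
  case: (ex_minnP ex) => n tn nmin.
  case: n tn nmin => [|m] tn nmin.
    by move: tn; rewrite c0 => /(lt_trans at_); rewrite ltxx.
  have cmt : (c m <= t%:E)%E.
    rewrite leNgt; apply/negP => h; have := nmin m h; by rewrite ltnn.
  have h1 : kk t%:E b <= 2 ^- m * K.
    rewrite -kk_c; apply: kk_mono => //; exact: c_ge_a.
  have h2 : pp a t%:E <= pp a (c m.+1).
    rewrite [c m.+1](c_real (isT : (0 < m.+1)%N)); apply: pp_mono => //.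
    - by rewrite -c_real // ltW.
    - by rewrite -c_real // c_gt_a.
    - by rewrite -c_real.
  apply: le_trans (ler_pM (pp_ge0 _ _) (kk_ge0 _ _) (le_trans h2 (S m)) h1) _.
  rewrite le_eqVlt; apply/orP; left; apply/eqP; rewrite !exprS; field; rewrite Kn0 andbT; exact: expf_neq0.
have h0 : kk t%:E b <= 0.
  apply: (@geo0 _ K _ Kpos) => n; rewrite -kk_c; apply: kk_mono => //; first exact: c_ge_a.
  by rewrite leNgt; apply/negP => h; apply: nex; exists n.
have -> : kk t%:E b = 0 by apply/eqP; rewrite eq_le h0 kk_ge0.
by rewrite mulr0 sqr_ge0.
Qed.

Lemma bwd : (limf_esup (fun t : R => (L2norm (eoo a t%:E) phi * L2norm (eoo t%:E b) kappa)%:E)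
             (at_left_e b) < +oo)%E ->
  exists M : R, forall n, (0 < n)%N ->
    L2norm (eoo (c n.-1) (c n)) kappa * L2norm (eoo (c n.-1) (c n)) phi <= M.
Proof.
have Fb : Filter (at_left_e b).
  move: ab; case: (b) => [r| |] /= h; [exact: _|exact: _|].
  by rewrite ltNge leNye in h.
move=> /(esup_ltP Fb) [M FM].
have Nb : (-oo < b)%E by apply: le_lt_trans ab; exact: leNye.
have [e [eb He]] := at_left_e_ex Nb FM.
exists (Num.sqrt (Num.max (M ^+ 2) (pp a e%:E * K))) => n n0.
rewrite /L2norm -sqrtrM ?kk_ge0 // ler_sqrt; last by rewrite le_max sqr_ge0.
rewrite kJ // -kk_c.
have cn := c_real n0.
have an := c_gt_a n0.
have h1 : pp (c n.-1) (c n) <= pp a (c n).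
  rewrite [in X in _ <= X]cn; apply: pp_mono => //.
  - exact: c_ge_a.
  - by rewrite -cn.
  - by rewrite -cn.
  - by rewrite -cn.
apply: le_trans (ler_wpM2l (kk_ge0 _ _) h1) _.
case: (ltP e (fine (c n))) => [ecn|cne].
  have := He _ ecn; rewrite -cn => /(_ (cb n)) /=.
  rewrite /L2norm -sqrtrM ?pp_ge0 // => hM.
  have M0 : 0 <= M by apply: le_trans hM; exact: sqrtr_ge0.
  move: hM; rewrite sqrt_le_sq ?mulr_ge0 ?pp_ge0 ?kk_ge0 // => hM.
  by rewrite -cn in hM; rewrite le_max mulrC hM.
rewrite le_max; apply/orP; right; rewrite mulrC.
have ae : (a < e%:E)%E by apply: lt_le_trans an _; rewrite cn lee_fin.
apply: ler_pM; [exact: pp_ge0|exact: kk_ge0| |].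
- rewrite [in X in X <= _]cn; apply: pp_mono => //; by rewrite ?lee_fin.
- apply: kk_mono => //; exact: ltW (an).
Qed.

End main.

Local Open Scope ring_scope.

Theorem lemma5p3 (R : realType) (a b : \bar R) (kappa phi : R -> R[i])
  (c : nat -> \bar R) :
  (a < b)%E ->
  cmeasurable (eoo a b) kappa ->
  cmeasurable (eoo a b) phi ->
  (L2sq (eoo a b) kappa < +oo)%E ->
  (forall t : R, (a < t%:E)%E -> (t%:E < b)%E -> (L2sq (eoo a t%:E) phi < +oo)%E) ->
  c 0%N = a ->
  (forall n, (c n < c n.+1)%E) ->
  (forall n, (c n < b)%E) ->
  (forall n, L2sq (eoo (c n) b) kappa = ((2 ^- n)%:E * L2sq (eoo a b) kappa)%E) ->
  let omega (n : nat) := L2norm (eoo (c n.-1) (c n)) kappa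
                         * L2norm (eoo (c n.-1) (c n)) phi in
  (exists M : R, forall n : nat, (0 < n)%N -> omega n <= M) <->
  (limf_esup (fun t : R => (L2norm (eoo a t%:E) phi * L2norm (eoo t%:E b) kappa)%:E)
             (at_left_e b) < +oo)%E.
Proof.
move=> ab mk mp kfin pfin c0 cinc cb chalf omega; split.
- move=> [M HM]; by apply: fwd HM.
- by apply: bwd.
Qed.
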